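(* Let $A,B:\mathbb{N}\to\mathbb{R}$ be functions with $\sum_{m\mid n} A(m) = B(n)$ for all $n\in\mathbb{N}$, and let $r,s$ be reals with $s\le\min\{0,r\}$. Then for every $n\in\mathbb{N}$: (i) $\sum_{m\mid n} \frac{m^s}{\varphi(m)^r} A(m) = \sum_{k\mid n} g^{r,s}_{k,n/k} B(k)$. (ii) If $\alpha,\beta:\mathbb{N}\to\mathbb{R}_{>0}$ satisfy $\beta(N)=\sum_{m\mid N}\alpha(m)$ for all $N\in\mathbb{N}$, and $B(k)\ge\beta(k)$ for all positive divisors $k$ of $n$, then $\sum_{m\mid n} \frac{m^s}{\varphi(m)^r}A(m) \ge \sum_{m\mid n}\frac{m^s}{\varphi(m)^r}\alpha(m)$, with equality if and only if $B(k)=\beta(k)$ for every positive divisor $k$ of $n$ such that $g^{r,s}_{k,n/k}\ne 0$.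
   Context: $\mu$ is the Möbius function, $\varphi$ is Euler's totient function, and for positive integers $m,j$, $g^{r,s}_{m,j} := \sum_{i\mid j} \frac{\mu(i)\,(mi)^s}{\varphi(mi)^r}$. $\mathbb{N}=\{1,2,3,\dots\}$. *)

(* Defs.v *)
From Stdlib Require Import Reals.
From mathcomp Require Import all_boot.

Set Implicit Arguments.
Unset Strict Implicit.
Unset Printing Implicit Defensive.

Local Open Scope R_scope.

Definition sumdiv (n : nat) (F : nat -> R) : R :=
  \big[Rplus/0]_(d <- divisors n) F d.

(* Moebius function: 0 at 0 (unused), (-1)^(#primes) if n is squarefree,
   0 otherwise. *)
Definition mobius (n : nat) : R :=
  if n == 0%N then 0
  else if all (fun p => logn p n == 1%N) (primes n)
       then (-1) ^ (size (primes n)) else 0.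

Definition wt (r s : R) (m : nat) : R :=
  Rpower (INR m) s / Rpower (INR (totient m)) r.

Definition gfun (r s : R) (m j : nat) : R :=
  sumdiv j (fun i => mobius i * wt r s (m * i)).

(* Main.v *)
From HB Require Import structures.
Require Import Defs.
From Stdlib Require Import Reals Lra Lia Psatz.
From mathcomp Require Import all_boot.
Open Scope R_scope.

Lemma Rplus_assoc' : associative Rplus.
Proof. by move=> x y z; rewrite Rplus_assoc. Qed.
HB.instance Definition _ := Monoid.isComLaw.Build R 0 Rplus Rplus_assoc' Rplus_comm Rplus_0_l.

Section Gen.
Variable I : Type.
Implicit Types (s : seq I) (P : pred I) (F G : I -> R).

Lemma bsum_mulr c s P F :
  c * \big[Rplus/0]_(i <- s | P i) F i = \big[Rplus/0]_(i <- s | P i) (c * F i).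
Proof.
apply: (big_rec2 (fun x y => c * x = y)); first by rewrite Rmult_0_r.
by move=> i x y _ <-; rewrite Rmult_plus_distr_l.
Qed.

Lemma bsum_opp s P F :
  - (\big[Rplus/0]_(i <- s | P i) F i) = \big[Rplus/0]_(i <- s | P i) (- F i).
Proof.
apply: (big_rec2 (fun x y => - x = y)); first by rewrite Ropp_0.
by move=> i x y _ <-; rewrite Ropp_plus_distr.
Qed.

Lemma bsum_minus s P F G :
  \big[Rplus/0]_(i <- s | P i) F i - \big[Rplus/0]_(i <- s | P i) G i
  = \big[Rplus/0]_(i <- s | P i) (F i - G i).
Proof.
by rewrite /Rminus bsum_opp -big_split.
Qed.

Lemma bsum_ge0 s P F : (forall i, P i -> 0 <= F i) ->
  0 <= \big[Rplus/0]_(i <- s | P i) F i.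
Proof.
move=> h; apply: (big_ind (fun x => 0 <= x)) => //; [lra| move=> x y; lra].
Qed.
End Gen.

Lemma bsum_eq0 (I : eqType) (s : seq I) (F : I -> R) :
  (forall i, i \in s -> 0 <= F i) ->
  \big[Rplus/0]_(i <- s) F i = 0 -> forall i, i \in s -> F i = 0.
Proof.
elim: s => [|a s IH] h; first by [].
rewrite big_cons => hs i; rewrite in_cons => /orP[/eqP->|hi].
- have := h a (mem_head _ _).
  have : 0 <= \big[Rplus/0]_(i <- s) F i.
    by rewrite big_seq; apply: bsum_ge0 => j hj; apply: h; rewrite in_cons hj orbT.
  lra.
- apply: IH => //; first by move=> j hj; apply: h; rewrite in_cons hj orbT.
  have := h a (mem_head _ _).
  have : 0 <= \big[Rplus/0]_(i <- s) F i.
    by rewrite big_seq; apply: bsum_ge0 => j hj; apply: h; rewrite in_cons hj orbT.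
  lra.
Qed.

Lemma mem_div n d : (0 < n)%N -> (d \in divisors n) = (d %| n)%N.
Proof. by move=> hn; rewrite -dvdn_divisors. Qed.

Lemma sumdiv_ext n F G : (0 < n)%N -> (forall d, (d %| n)%N -> F d = G d) ->
  sumdiv n F = sumdiv n G.
Proof.
move=> hn h; rewrite /sumdiv big_seq [RHS]big_seq; apply: eq_bigr => d.
by rewrite mem_div //; apply: h.
Qed.

Lemma divdiv n d : (0 < n)%N -> (d %| n)%N -> (n %/ (n %/ d))%N = d.
Proof.
move=> hn hd; have dpos : (0 < d)%N by apply: dvdn_gt0 hd.
have qpos : (0 < n %/ d)%N by rewrite divn_gt0 // dvdn_leq.
by rewrite -{1}(divnK hd) mulKn.
Qed.

Lemma sumdiv_inv n F : (0 < n)%N ->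
  sumdiv n (fun d => F (n %/ d)%N) = sumdiv n F.
Proof.
move=> hn; rewrite /sumdiv -(big_map (fun d => (n %/ d)%N) xpredT F).
apply: perm_big; apply: uniq_perm.
- rewrite map_inj_in_uniq ?divisors_uniq // => x y.
  rewrite !mem_div // => hx hy e.
  by rewrite -(@divdiv n x hn hx) e divdiv.
- exact: divisors_uniq.
- move=> x; rewrite mem_div //; apply/mapP/idP.
  + by move=> [d]; rewrite mem_div // => hd ->; apply: dvdn_div.
  + move=> hx; exists (n %/ x)%N; last by rewrite divdiv.
    by rewrite mem_div // dvdn_div.
Qed.

Lemma sumdiv_filter n m G : (0 < n)%N -> (m %| n)%N ->
  sumdiv m G = \big[Rplus/0]_(d <- divisors n | (d %| m)%N) G d.
Proof.
move=> hn hm; have mpos : (0 < m)%N by apply: dvdn_gt0 hm.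
rewrite /sumdiv -[RHS]big_filter; apply: perm_big; apply: uniq_perm.
- exact: divisors_uniq.
- by rewrite filter_uniq // divisors_uniq.
- move=> x; rewrite mem_filter !mem_div //.
  apply/idP/andP => [hx|[] //]; split=> //; exact: dvdn_trans hx hm.
Qed.

Lemma sumdiv_mulfilter n d G : (0 < n)%N -> (d %| n)%N ->
  \big[Rplus/0]_(m <- divisors n | (d %| m)%N) G m
  = sumdiv (n %/ d) (fun t => G (d * t)%N).
Proof.
move=> hn hd; have dpos : (0 < d)%N by apply: dvdn_gt0 hd.
have qpos : (0 < n %/ d)%N by rewrite divn_gt0 // dvdn_leq.
rewrite /sumdiv -big_filter -(big_map (fun t => (d * t)%N) xpredT G).
apply: perm_big; apply: uniq_perm.
- by rewrite filter_uniq // divisors_uniq.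
- rewrite map_inj_in_uniq ?divisors_uniq // => x y _ _ /eqP.
  by rewrite eqn_pmul2l // => /eqP.
- move=> x; rewrite mem_filter mem_div //; apply/andP/mapP.
  + move=> [hdx hxn]; exists (x %/ d)%N; last by rewrite mulnC divnK.
    by rewrite mem_div // dvdn_divRL // divnK.
  + move=> [t ht ->]; split; first exact: dvdn_mulr.
    by move: ht; rewrite mem_div // dvdn_divRL // mulnC.
Qed.

Lemma sumdiv_pairs n (H : nat -> nat -> R) : (0 < n)%N ->
  sumdiv n (fun d => sumdiv (n %/ d) (fun t => H d t))
  = sumdiv n (fun m => sumdiv m (fun d => H d (m %/ d)%N)).
Proof.
move=> hn.
have e1 : sumdiv n (fun m => sumdiv m (fun d => H d (m %/ d)%N))
  = \big[Rplus/0]_(m <- divisors n) \big[Rplus/0]_(d <- divisors n | (d %| m)%N)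
       H d (m %/ d)%N.
  rewrite /sumdiv big_seq [RHS]big_seq; apply: eq_bigr => m.
  by rewrite mem_div // => hm; rewrite -sumdiv_filter.
rewrite e1 (exchange_big_dep xpredT) //=.
rewrite /sumdiv big_seq [RHS]big_seq; apply: eq_bigr => d.
rewrite mem_div // => hd.
have dpos : (0 < d)%N by apply: dvdn_gt0 hd.
rewrite sumdiv_mulfilter //; apply: eq_bigr => t _.
by rewrite mulKn.
Qed.

Lemma mobius1 : mobius 1 = 1.
Proof. by rewrite /mobius /=. Qed.

Lemma mobius_sq p d : prime p -> (0 < d)%N -> (p * p %| d)%N -> mobius d = 0.
Proof.
move=> pp dp hd; rewrite /mobius.
have -> : (d == 0)%N = false by apply/negbTE; rewrite -lt0n dp.
case: ifP => // /allP h; exfalso.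
have hp : p \in primes d.
  by rewrite mem_primes pp dp; apply: dvdn_trans hd; apply: dvdn_mulr.
have := h p hp; change (p * p)%N with (p ^ 2)%N in hd.
by move: hd; rewrite pfactor_dvdn // => /leq_trans h2 /eqP e; move: (h2 _ (leqnn _)); rewrite e.
Qed.

Lemma mobius_mulp p i : prime p -> (0 < i)%N -> ~~ (p %| i)%N ->
  mobius (p * i) = - mobius i.
Proof.
move=> pp ip ndiv.
have pos : (0 < p)%N by apply: prime_gt0.
have hperm : perm_eq (primes (p * i)) (p :: primes i).
  apply: uniq_perm; first exact: primes_uniq.
    by rewrite /= primes_uniq andbT mem_primes (negbTE ndiv) !andbF.
  by move=> q; rewrite in_cons primesM // primes_prime // mem_seq1.
have h1 : (p * i == 0)%N = false by apply/negbTE; rewrite -lt0n muln_gt0 pos ip.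
have h2 : (i == 0)%N = false by apply/negbTE; rewrite -lt0n ip.
rewrite /mobius h1 h2 (perm_all _ hperm) (perm_size hperm) /=.
have -> : logn p (p * i) = 1%N.
  rewrite lognM // logn_prime // eqxx logn_coprime //.
  by rewrite prime_coprime.
rewrite eqxx /=.
rewrite (@eq_in_all _ _ (fun q => logn q i == 1)%N); last first.
  move=> q; rewrite mem_primes => /and3P[qp _ qi].
  rewrite lognM // logn_prime //.
  case: (eqVneq q p) => [e|ne]; last by [].
  by move: ndiv; rewrite -e qi.
case: ifP => _ /=; lra.
Qed.

Lemma sumdiv_split p a j F : prime p -> (0 < a)%N -> (0 < j)%N -> ~~ (p %| j)%N ->
  sumdiv (p ^ a * j) (fun i => mobius i * F i)
  = sumdiv j (fun i => mobius i * F i) - sumdiv j (fun i => mobius i * F (p * i)%N).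
Proof.
move=> pp; case: a => // a _ jp ndiv.
have pos : (0 < p)%N by apply: prime_gt0.
have nE : (p ^ a.+1 * j = p * (p ^ a * j))%N by rewrite expnS mulnA.
have np : (0 < p ^ a.+1 * j)%N by rewrite muln_gt0 expn_gt0 pos jp.
have cop : forall k x, ~~ (p %| x)%N -> coprime x (p ^ k) .
  by move=> k x hx; apply: coprimeXr; rewrite coprime_sym prime_coprime.
rewrite /sumdiv (bigID (fun d => (p * p %| d)%N)) /=.
rewrite big1_seq; last first.
  move=> d /andP[hd]; rewrite mem_div // => hdn.
  by rewrite (@mobius_sq p d pp (dvdn_gt0 np hdn) hd) Rmult_0_l.
rewrite Rplus_0_l (bigID (fun d => (p %| d)%N)) /= Rplus_comm.
have E2 : perm_eq [seq i <- divisors (p ^ a.+1 * j) | ~~ (p * p %| i) && ~~ (p %| i)]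
             (divisors j).
  apply: uniq_perm; [by rewrite filter_uniq // divisors_uniq| exact: divisors_uniq|].
  move=> x; rewrite mem_filter !mem_div //; apply/idP/idP.
  - move=> /andP[/andP[_ hx] hxn]; by rewrite -(Gauss_dvdr _ (cop a.+1 _ hx)).
  - move=> hx; have hpx : ~~ (p %| x)%N.
      by apply/negP => h; move: ndiv; rewrite (dvdn_trans h hx).
    rewrite hpx dvdn_mull // !andbT; apply/negP => h.
    by move: hpx; rewrite (dvdn_trans (dvdn_mulr p (dvdnn p)) h).
have E1 : perm_eq [seq i <- divisors (p ^ a.+1 * j) | ~~ (p * p %| i) && (p %| i)]
             (map (muln p) (divisors j)).
  apply: uniq_perm; [by rewrite filter_uniq // divisors_uniq| |].
    rewrite map_inj_in_uniq ?divisors_uniq // => x y _ _ /eqP.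
    by rewrite eqn_pmul2l // => /eqP.
  move=> x; rewrite mem_filter mem_div //; apply/idP/mapP.
  - move=> /andP[/andP[hx1 hx2] hxn]; exists (x %/ p)%N; last by rewrite mulnC divnK.
    have xe : x = (p * (x %/ p))%N by rewrite mulnC divnK.
    rewrite mem_div //.
    move: hx1 hxn; rewrite nE {1 2}xe dvdn_pmul2l // dvdn_pmul2l // => hq hqn.
    by rewrite -(Gauss_dvdr _ (cop a _ hq)).
  - move=> [i]; rewrite mem_div // => hi ->.
    have hpi : ~~ (p %| i)%N.
      by apply/negP => h; move: ndiv; rewrite (dvdn_trans h hi).
    rewrite dvdn_pmul2l // hpi dvdn_mulr // nE dvdn_pmul2l //.
    by rewrite dvdn_mull.
rewrite -[X in X + _]big_filter -[X in _ + X]big_filter.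
rewrite (perm_big _ E2) (perm_big _ E1) big_map /Rminus bsum_opp.
congr Rplus.
rewrite big_seq [RHS]big_seq; apply: eq_bigr => i; rewrite mem_div // => hi.
have hpi : ~~ (p %| i)%N.
  by apply/negP => h; move: ndiv; rewrite (dvdn_trans h hi).
rewrite mobius_mulp // ?(dvdn_gt0 jp hi) //; lra.
Qed.

Lemma pfact p x : prime p -> (0 < x)%N -> (p %| x)%N ->
  exists e y, [/\ (0 < e)%N, (0 < y)%N, ~~ (p %| y)%N & x = (p ^ e * y)%N].
Proof.
move=> pp xp hpx.
have pos : (0 < p)%N by apply: prime_gt0.
set e := logn p x.
have ep : (0 < e)%N by rewrite logn_gt0 mem_primes pp xp.
have hd := pfactor_dvdnn p x.
have ppos : (0 < p ^ e)%N by rewrite expn_gt0 pos.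
exists e, (x %/ p ^ e)%N; split => //.
- by rewrite divn_gt0 // dvdn_leq.
- apply/negP => h.
  have : (p ^ e.+1 %| x)%N.
    by rewrite -(divnK hd) expnSr mulnC dvdn_pmul2r.
  by rewrite pfactor_dvdn // ltnn.
- by rewrite mulnC divnK.
Qed.

Lemma pdecomp n : (1 < n)%N ->
  exists p a j, [/\ prime p, (0 < a)%N, (0 < j)%N & ~~ (p %| j)%N] /\
                    n = (p ^ a * j)%N /\ (j < n)%N.
Proof.
move=> hn.
have pp := pdiv_prime hn.
have np : (0 < n)%N by apply: ltnW.
have [e [y [ep yp hy ne]]] := @pfact _ _ pp np (pdiv_dvd n).
exists (pdiv n), e, y; split => //; split => //.
rewrite {1}ne; apply: ltn_Pmull => //.
apply: leq_trans (prime_gt1 pp) _.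
by rewrite -{1}(expn1 (pdiv n)) leq_pexp2l // prime_gt0.
Qed.

Lemma sumdiv_mobius n : (0 < n)%N -> sumdiv n mobius = if n == 1%N then 1 else 0.
Proof.
move=> np; case: (ltngtP n 1) => [h|hn|->].
- by case: n np h.
- have [p [a [j [[pp ap jp ndiv] [ne _]]]]] := @pdecomp n hn.
  have -> : sumdiv n mobius = sumdiv n (fun i => mobius i * (fun _ => 1) i).
    by apply: sumdiv_ext => // d _; rewrite Rmult_1_r.
  rewrite ne sumdiv_split //; lra.
- by rewrite /sumdiv /= big_cons big_nil mobius1 Rplus_0_r.
Qed.

Lemma sumdiv_delta N (X : nat -> R) : (0 < N)%N ->
  sumdiv N (fun u => if u == 1%N then X u else 0) = X 1%N.
Proof.
move=> Np; rewrite /sumdiv (bigD1_seq 1%N) ?divisor1 ?divisors_uniq //= big1.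
  by rewrite Rplus_0_r.
by move=> i /negbTE ->.
Qed.

Lemma totient_mulp x p : prime p -> (0 < x)%N ->
  totient (x * p) = (totient x * (if p %| x then p else p.-1))%N.
Proof.
move=> pp xp; have pos : (0 < p)%N by apply: prime_gt0.
case: ifP => hpx.
- have [e [y [ep yp hy ->]]] := @pfact p x pp xp hpx.
  have cy : forall k, coprime (p ^ k) y.
    by move=> k; apply: coprimeXl; rewrite prime_coprime.
  rewrite mulnAC -expnSr !totient_coprime // !totient_pfactor //.
  case: e ep {cy} => // e _ /=.
  by rewrite expnSr -!mulnA (mulnC p).
- have cop : coprime x p by rewrite coprime_sym prime_coprime ?hpx.
  by rewrite totient_coprime // (totient_prime pp).
Qed.

Lemma INR_muln a b : INR (a * b)%N = INR a * INR b.
Proof. by rewrite -mult_INR. Qed.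

Lemma Rpower_pos x y : 0 < Rpower x y.
Proof. by rewrite /Rpower; apply: exp_pos. Qed.

Lemma INR_pos k : (0 < k)%N -> 0 < INR k.
Proof. by move=> h; apply: lt_0_INR; apply/ltP. Qed.

Lemma wt_pos r s m : 0 < wt r s m.
Proof.
rewrite /wt /Rdiv; apply: Rmult_lt_0_compat; first exact: Rpower_pos.
by apply: Rinv_0_lt_compat; apply: Rpower_pos.
Qed.

Lemma wt_mulp r s x p : prime p -> (0 < x)%N ->
  wt r s (x * p) = wt r s x *
    (Rpower (INR p) s / Rpower (INR (if p %| x then p else p.-1)%N) r).
Proof.
move=> pp xp; have pos : (0 < p)%N by apply: prime_gt0.
have cpos : (0 < (if p %| x then p else p.-1))%N.
  by case: ifP => // _; rewrite -ltnS prednK // prime_gt1.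
have tpos : (0 < totient x)%N by rewrite totient_gt0.
rewrite /wt totient_mulp // !INR_muln.
rewrite -!Rpower_mult_distr ?INR_pos //.
have h1 := Rpower_pos (INR (totient x)) r.
have h2 := Rpower_pos (INR (if p %| x then p else p.-1)%N) r.
field; first lra.
all: by apply: INR_pos.
Qed.

Lemma ln_mono x y : 0 < x -> x <= y -> ln x <= ln y.
Proof.
move=> hx hxy; case: (Rle_lt_or_eq_dec _ _ hxy) => h.
- by apply: Rlt_le; apply: ln_increasing.
- by rewrite h; apply: Rle_refl.
Qed.

Lemma h_le1 r s p (c : nat) : s <= Rmin 0 r -> prime p -> (0 < c)%N -> (c <= p)%N ->
  Rpower (INR p) s / Rpower (INR c) r <= 1.
Proof.
move=> hs pp cp cle.
have [s0 sr] : s <= 0 /\ s <= r by move: hs; rewrite /Rmin; case: Rle_dec; lra.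
have lc0 : 0 <= ln (INR c).
  rewrite -ln_1; apply: ln_mono; first lra.
  by apply: (le_INR 1); apply/leP.
have lcp : ln (INR c) <= ln (INR p).
  by apply: ln_mono; [apply: INR_pos | apply: le_INR; apply/leP].
have key : s * ln (INR p) <= r * ln (INR c).
  case: (Rle_lt_dec 0 r) => hr; nra.
rewrite /Rpower /Rdiv -exp_Ropp -exp_plus -exp_0.
case: (Rle_lt_or_eq_dec (s * ln (INR p) + - (r * ln (INR c))) 0); first lra.
- by move=> h; apply: Rlt_le; apply: exp_increasing.
- by move=> ->; apply: Rle_refl.
Qed.

Lemma g_nonneg r s m j : s <= Rmin 0 r -> (0 < m)%N -> (0 < j)%N ->
  0 <= gfun r s m j.
Proof.
move=> hs mp; elim/ltn_ind: j => j IH jp.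
case: (ltngtP j 1) => [h|hj|->].
- by case: j jp h IH.
- have [p [a [j' [[pp ap jp' ndiv] [je jlt]]]]] := @pdecomp j hj.
  have pos : (0 < p)%N by apply: prime_gt0.
  set c := (if p %| m then p else p.-1)%N.
  set h := Rpower (INR p) s / Rpower (INR c) r.
  have hle : h <= 1.
    apply: h_le1 => //; rewrite /c; case: ifP => // _.
    + by rewrite -ltnS prednK // prime_gt1.
    + exact: leq_pred.
  have E : sumdiv j' (fun i => mobius i * wt r s (m * (p * i))%N)
           = h * gfun r s m j'.
    rewrite /gfun bsum_mulr; apply: sumdiv_ext => // i hi.
    have ipos : (0 < i)%N by apply: dvdn_gt0 hi.
    have hpi : ~~ (p %| i)%N.
      by apply/negP => hh; move: ndiv; rewrite (dvdn_trans hh hi).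
    rewrite mulnCA mulnC wt_mulp ?muln_gt0 ?mp ?ipos //.
    rewrite Euclid_dvdM // (negbTE hpi) orbF -/c -/h mulnC; lra.
  rewrite /gfun je sumdiv_split // -/(gfun r s m j') E.
  have := IH j' jlt jp'; nra.
- by rewrite /gfun /sumdiv /= big_cons big_nil mobius1 muln1 Rplus_0_r
     Rmult_1_l; apply: Rlt_le; apply: wt_pos.
Qed.

Lemma partI r s (A B : nat -> R) n : (forall N, (0 < N)%N -> sumdiv N A = B N) ->
  (0 < n)%N ->
  sumdiv n (fun m => wt r s m * A m)
  = sumdiv n (fun k => gfun r s k (n %/ k)%N * B k).
Proof.
move=> hAB np.
have inner : forall d, (d %| n)%N ->
    sumdiv (n %/ d) (fun t => gfun r s (d * t) (n %/ (d * t))) = wt r s d.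
  move=> d hd.
  have dpos : (0 < d)%N by apply: dvdn_gt0 hd.
  have Np : (0 < n %/ d)%N by rewrite divn_gt0 // dvdn_leq.
  transitivity (sumdiv (n %/ d)%N (fun t => sumdiv ((n %/ d) %/ t)%N
                   (fun i => mobius i * wt r s (d * t * i)%N))).
    by apply: sumdiv_ext => // t _; rewrite /gfun divnMA.
  rewrite (@sumdiv_pairs (n %/ d)%N (fun t i => mobius i * wt r s (d * t * i)%N) Np).
  transitivity (sumdiv (n %/ d)%N (fun u => if u == 1%N then wt r s (d * u) else 0)).
    apply: sumdiv_ext => // u hu.
    have upos : (0 < u)%N by apply: dvdn_gt0 hu.
    transitivity (wt r s (d * u) * sumdiv u (fun t => mobius (u %/ t)%N)).
      rewrite bsum_mulr; apply: sumdiv_ext => // t ht.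
      by rewrite -mulnA (mulnC t) divnK // Rmult_comm.
    rewrite (@sumdiv_inv u mobius upos) sumdiv_mobius //.
    by case: ifP => _; ring.
  by rewrite sumdiv_delta // muln1.
symmetry.
transitivity (sumdiv n (fun k => sumdiv k (fun d => gfun r s k (n %/ k)%N * A d))).
  apply: sumdiv_ext => // k hk.
  by rewrite -hAB ?(dvdn_gt0 np hk) // bsum_mulr.
transitivity (sumdiv n (fun m => sumdiv m (fun d =>
   (fun d t => gfun r s (d * t) (n %/ (d * t)) * A d) d (m %/ d)%N))).
  apply: sumdiv_ext => // m hm.
  have mpos : (0 < m)%N by apply: dvdn_gt0 hm.
  apply: sumdiv_ext => // d hd.
  by rewrite mulnC divnK.
transitivity (sumdiv n (fun d => sumdiv (n %/ d)%N
   (fun t => gfun r s (d * t) (n %/ (d * t)) * A d))).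
  by symmetry; apply: (@sumdiv_pairs n (fun d t => gfun r s (d * t) (n %/ (d * t)) * A d) np).
apply: sumdiv_ext => // d hd.
rewrite -(inner d hd) [RHS]Rmult_comm /sumdiv bsum_mulr.
by apply: eq_bigr => t _; rewrite Rmult_comm.
Qed.

Theorem lemma2p2 (A B : nat -> R) (r s : R) :
  (forall n : nat, (0 < n)%N -> sumdiv n A = B n) ->
  s <= Rmin 0 r ->
  forall n : nat, (0 < n)%N ->
    sumdiv n (fun m => wt r s m * A m)
      = sumdiv n (fun k => gfun r s k (n %/ k)%N * B k)
    /\
    (forall alpha beta : nat -> R,
       (forall N : nat, (0 < N)%N -> 0 < alpha N) ->
       (forall N : nat, (0 < N)%N -> 0 < beta N) ->
       (forall N : nat, (0 < N)%N -> beta N = sumdiv N alpha) ->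
       (forall k : nat, (0 < k)%N -> (k %| n)%N -> beta k <= B k) ->
       sumdiv n (fun m => wt r s m * A m)
         >= sumdiv n (fun m => wt r s m * alpha m)
       /\
       (sumdiv n (fun m => wt r s m * A m)
          = sumdiv n (fun m => wt r s m * alpha m)
        <->
        (forall k : nat, (0 < k)%N -> (k %| n)%N ->
           gfun r s k (n %/ k)%N <> 0 -> B k = beta k))).
Proof.
move=> hAB hs n np; split; first exact: partI.
move=> alpha beta _ _ hab hle.
have hD : forall N, (0 < N)%N -> sumdiv N (fun m => A m - alpha m) = B N - beta N.
  move=> N Np; rewrite -hAB // hab // /sumdiv bsum_minus //.
have Ediff : sumdiv n (fun m => wt r s m * A m) - sumdiv n (fun m => wt r s m * alpha m)
   = sumdiv n (fun k => gfun r s k (n %/ k)%N * (B k - beta k)).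
  rewrite -(@partI r s _ _ n hD np) /sumdiv bsum_minus.
  by apply: eq_bigr => m _; ring.
have term0 : forall k, k \in divisors n ->
    0 <= gfun r s k (n %/ k)%N * (B k - beta k).
  move=> k; rewrite mem_div // => hk.
  have kp : (0 < k)%N by apply: dvdn_gt0 hk.
  apply: Rmult_le_pos.
    by apply: g_nonneg => //; rewrite divn_gt0 // dvdn_leq.
  by have := hle k kp hk; lra.
have sum0 : 0 <= sumdiv n (fun k => gfun r s k (n %/ k)%N * (B k - beta k)).
  by rewrite /sumdiv big_seq; apply: bsum_ge0.
split; first by apply: Rle_ge; lra.
split.
- move=> he k kp hk hg.
  have z : sumdiv n (fun k => gfun r s k (n %/ k)%N * (B k - beta k)) = 0 by lra.
  have := @bsum_eq0 _ _ _ term0 z k; rewrite mem_div // => /(_ hk) e.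
  case: (Rmult_integral _ _ e) => // ?; lra.
- move=> h.
  suff : sumdiv n (fun k => gfun r s k (n %/ k)%N * (B k - beta k)) = 0 by lra.
  rewrite /sumdiv big1_seq // => k /andP[_]; rewrite mem_div // => hk.
  have kp : (0 < k)%N by apply: dvdn_gt0 hk.
  case: (Req_dec (gfun r s k (n %/ k)%N) 0) => hg.
    by rewrite hg Rmult_0_l.
  by rewrite (h k kp hk hg); ring.
Qed.
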